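(* Let $N_{v_1},\dots,N_{v_k}$ be positive integers and $N_u$ a nonnegative integer, and let $N_u^1,\dots,N_u^k$ be computed by the following procedure: set $\Delta\gets0$; for $i=1,\dots,k$, let $x=\frac{N_{v_i}}{\sum_{j=1}^kN_{v_j}}\cdot N_u$; if $\Delta\ge x-\lfloor x\rfloor$, set $N_u^i\gets\lfloor x\rfloor$ and $\Delta\gets\Delta-(x-\lfloor x\rfloor)$; otherwise set $N_u^i\gets\lfloor x\rfloor+1$ and $\Delta\gets\Delta+1-(x-\lfloor x\rfloor)$. Then: (1) for every $i\in\{1,\dots,k\}$, $\sum_{j=1}^iN_u^j-1\le\frac{\sum_{j=1}^iN_{v_j}}{\sum_{j=1}^kN_{v_j}}\cdot N_u\le\sum_{j=1}^iN_u^j$; (2) for all $i_1,i_2\in\{1,\dots,k\}$ with $i_1<i_2$, $\sum_{j=i_1}^{i_2}N_u^j\le\frac{\sum_{j=i_1}^{i_2}N_{v_j}}{\sum_{j=1}^kN_{v_j}}\cdot N_u+1$; (3) $\sum_{j=1}^kN_u^j\ge N_u$. *)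

(* Defs.v *)
From mathcomp Require Import all_boot all_order all_algebra.
Set Implicit Arguments. Unset Strict Implicit. Unset Printing Implicit Defensive.
Import Order.TTheory GRing.Theory Num.Theory.
Local Open Scope ring_scope.

Fixpoint alloc_aux (Nv : seq nat) (S Nu : nat) (D : rat) : seq int :=
  match Nv with
  | [::] => [::]
  | v :: vs =>
      let x : rat := (v%:R / S%:R) * Nu%:R in
      let fl := Num.floor x in
      let f := x - fl%:~R in
      if f <= D then fl :: alloc_aux vs S Nu (D - f)
      else (fl + 1) :: alloc_aux vs S Nu (D + 1 - f)
  end.

Definition alloc (Nv : seq nat) (Nu : nat) : seq int :=
  alloc_aux Nv (\sum_(v <- Nv) v)%N Nu 0.

(* Main.v *)
Require Import Defs.
From mathcomp Require Import all_boot all_order all_algebra.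
From mathcomp Require Import lra.
Import Order.TTheory GRing.Theory Num.Theory.
Local Open Scope ring_scope.

Lemma core (Nv : seq nat) (S Nu : nat) (D : rat) : 0 <= D < 1 ->
  forall i, (i <= size Nv)%N -> exists2 d : rat, 0 <= d < 1 &
  \sum_(0 <= j < i) (nth 0%Z (alloc_aux Nv S Nu D) j)%:~R =
  \sum_(0 <= j < i) ((nth 0%N Nv j)%:R / S%:R * Nu%:R) + d - D.
Proof.
elim: Nv D => [|v vs IH] D /andP[hD0 hD1] [|i] hi //=.
- by exists D; [apply/andP | rewrite !big_geq // add0r subrr].
- by exists D; [apply/andP | rewrite !big_geq // add0r subrr].
rewrite !big_nat_recl //=.
set x := v%:R / S%:R * Nu%:R.
have /andP[fl1 fl2] := floor_itv x.
rewrite intrD (_ : (1%:~R : rat) = 1) // in fl2.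
case: ifP => hf /=.
  have [|d hd ->] := IH (D - (x - (Num.floor x)%:~R)) _ i hi.
    apply/andP; split; lra.
  by exists d => //; lra.
have hf' : D < x - (Num.floor x)%:~R by rewrite ltNge hf.
have [|d hd ->] := IH (D + 1 - (x - (Num.floor x)%:~R)) _ i hi.
  apply/andP; split; lra.
by exists d => //; rewrite intrD (_ : (1%:~R : rat) = 1) //; lra.
Qed.

Theorem lemma9 (Nv : seq nat) (Nu : nat) :
  (0 < size Nv)%N -> all (fun v => 0 < v)%N Nv ->
  let k := size Nv in
  let S : rat := (\sum_(j < k) (nth 0%N Nv j))%:R in
  let a (j : nat) : rat := (nth 0%Z (alloc Nv Nu) j)%:~R in
  (forall i : nat, (1 <= i <= k)%N ->
     (\sum_(0 <= j < i) a j) - 1 <= (\sum_(0 <= j < i) nth 0%N Nv j)%:R / S * Nu%:R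
     /\ (\sum_(0 <= j < i) nth 0%N Nv j)%:R / S * Nu%:R <= \sum_(0 <= j < i) a j)
  /\ (forall i1 i2 : nat, (1 <= i1)%N -> (i1 < i2)%N -> (i2 <= k)%N ->
     \sum_(i1.-1 <= j < i2) a j
       <= (\sum_(i1.-1 <= j < i2) nth 0%N Nv j)%:R / S * Nu%:R + 1)
  /\ Nu%:R <= \sum_(0 <= j < k) a j.
Proof.
move=> hk hpos k S a.
have hS : (\sum_(v <- Nv) v)%N = (\sum_(j < k) nth 0%N Nv j)%N.
  by rewrite (big_nth 0%N) big_mkord.
have key : forall i, (i <= k)%N -> exists2 d : rat, 0 <= d < 1 &
    \sum_(0 <= j < i) a j = (\sum_(0 <= j < i) nth 0%N Nv j)%:R / S * Nu%:R + d.
  move=> i hi.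
  have [|d hd E] := @core Nv (\sum_(v <- Nv) v)%N Nu 0 _ i hi.
    by rewrite lexx ltr01.
  exists d => //.
  rewrite /a /alloc E subr0 [(\sum_(0 <= j < i) _)%:R]natr_sum !mulr_suml /S -hS.
  done.
have Spos : S != 0.
  rewrite /S pnatr_eq0 -lt0n.
  have h0 : (0 < nth 0%N Nv 0)%N by apply: (all_nthP 0%N hpos).
  rewrite (bigD1 (Ordinal hk)) //=.
  by rewrite ltn_addr.
split.
  move=> i /andP[_ hi].
  have [d /andP[d0 d1] ->] := key i hi.
  split; lra.
split.
  move=> i1 i2 h1 h12 h2.
  have hm : (i1.-1 <= i2)%N by rewrite (leq_trans (leq_pred _)) // ltnW.
  have [d1 /andP[d10 d11] E1] := key i1.-1 (leq_trans hm h2).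
  have [d2 /andP[d20 d21] E2] := key i2 h2.
  have Ea : \sum_(i1.-1 <= j < i2) a j = \sum_(0 <= j < i2) a j - \sum_(0 <= j < i1.-1) a j.
    by rewrite (@big_cat_nat _ _ _ i1.-1 0 i2) //=; lra.
  have En : (\sum_(0 <= j < i2) nth 0%N Nv j)%N = (\sum_(0 <= j < i1.-1) nth 0%N Nv j + \sum_(i1.-1 <= j < i2) nth 0%N Nv j)%N.
    by rewrite (@big_cat_nat _ _ _ i1.-1 0 i2).
  rewrite Ea E1 E2 En natrD mulrDl mulrDl.
  lra.
have [d /andP[d0 d1] ->] := key k (leqnn k).
have -> : (\sum_(0 <= j < k) nth 0%N Nv j)%:R / S * Nu%:R = Nu%:R.
  by rewrite /S big_mkord divff // mul1r.
lra.
Qed.
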